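(* (1) The normalized $k$-derivations $D$ of $kQ$ (those with $D(e_i)=0$ for $i=1,2,3$) are exactly the derivations with $D(\alpha)=\alpha\,a(\beta)$, $D(\beta)=b(\beta)$, $D(\gamma)=h(\beta)\gamma$ for arbitrary polynomials $a,b,h\in k[\beta]$. (2) Such a $D$ satisfies $D(I)\subseteq I$ for $I=I(n;n',n'';V)$ (i.e. descends to a derivation of $\Lambda=kQ/I$) if and only if $\delta\, b(0)=0$ in $k$ and the first order differential operator $\Theta_D=(a(\beta)+h(\beta))+b(\beta)\frac{d}{d\beta}$ on $k[\beta]$ satisfies $\Theta_D(V)\subseteq V$. (3) If $D$ descends to $\Lambda$, the induced derivation of $\Lambda$ is inner if and only if $a(\beta)+h(\beta)\equiv a(0)+h(0)\pmod{\beta^{m}}$ and $b(\beta)\equiv 0\pmod{\beta^n}$, where $m=\min(n',n'')$.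
   Context: $k$ is a field; $Q$ is the quiver with vertices $1,2,3$ and arrows $\alpha\colon 2\to1$, $\beta\colon 2\to 2$, $\gamma\colon 3\to 2$; $kQ$ is generated by pairwise orthogonal idempotents $e_1,e_2,e_3$ (sum $1$) and $\alpha,\beta,\gamma$ with $e_1\alpha=\alpha=\alpha e_2$, $e_2\beta=\beta=\beta e_2$, $e_3\gamma=\gamma=\gamma e_2$, $\gamma\alpha=\beta\alpha=\gamma\beta=0$; for $p=\sum_ip_i\beta^i\in k[\beta]$ write $\alpha p=\sum_i p_i\alpha\beta^i$, $p\gamma=\sum_i p_i\beta^i\gamma$, $\alpha p\gamma=\sum_ip_i\alpha\beta^i\gamma$, and $p=\sum_i p_i\beta^i$ with $\beta^0=e_2$ inside $kQ$. For integers $n\ge 2$, $1\le n',n''\le n$, $m=\min(n',n'')$ and a $k$-subspace $V\subseteq k[\beta]$ containing $(\beta^m)$, $I(n;n',n'';V)$ denotes the two-sided ideal of $kQ$ generated by $\alpha\beta^{n'}$, $\beta^n$, $\beta^{n''}\gamma$ and all $\alpha v\gamma$, $v\in V$. Put $\delta=\gcd(n,n',n'')$ (an integer, viewed in $k$). *)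

(* Defs.v *)
From HB Require Import structures.
From mathcomp Require Import all_boot all_order all_algebra.
Set Implicit Arguments. Unset Strict Implicit. Unset Printing Implicit Defensive.
Import Order.TTheory GRing.Theory Num.Theory.
Local Open Scope ring_scope.

(* The path algebra kQ of the quiver 1 <-alpha- 2 (loop beta at 2) <-gamma- 3,
   given concretely by its path basis: an element
     KQ c1 c3 p2 pa pg pag
   stands for
     c1 e1 + c3 e3 + p2(beta) + alpha pa(beta) + pg(beta) gamma
       + alpha pag(beta) gamma,
   with the convention beta^0 = e2.  The basis of kQ consists of the paths
   e1, e3, beta^i (i>=0, beta^0 = e2), alpha beta^i, beta^i gamma,
   alpha beta^i gamma, so this is exactly kQ as a k-vector space. *)
Record kQ (k : fieldType) := KQ {
  c1 : k; c3 : k;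
  p2 : {poly k}; pa : {poly k}; pg : {poly k}; pag : {poly k} }.

Section KQops.
Variable k : fieldType.
Implicit Types x y : kQ k.

Definition kQzero : kQ k := KQ 0 0 0 0 0 0.
Definition kQadd x y : kQ k :=
  KQ (c1 x + c1 y) (c3 x + c3 y) (p2 x + p2 y) (pa x + pa y)
     (pg x + pg y) (pag x + pag y).
Definition kQopp x : kQ k :=
  KQ (- c1 x) (- c3 x) (- p2 x) (- pa x) (- pg x) (- pag x).
Definition kQscale (c : k) x : kQ k :=
  KQ (c * c1 x) (c * c3 x) (c *: p2 x) (c *: pa x) (c *: pg x) (c *: pag x).
(* Concatenation of paths (composition written right-to-left as in the
   paper: alpha = e1 alpha e2, gamma = e2 gamma e3). *)
Definition kQmul x y : kQ k :=
  KQ (c1 x * c1 y) (c3 x * c3 y) (p2 x * p2 y)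
     (c1 x *: pa y + pa x * p2 y)
     (p2 x * pg y + c3 y *: pg x)
     (c1 x *: pag y + pa x * pg y + c3 y *: pag x).
Definition kQsub x y := kQadd x (kQopp y).

Definition e1 : kQ k := KQ 1 0 0 0 0 0.
Definition e2 : kQ k := KQ 0 0 1 0 0 0.
Definition e3 : kQ k := KQ 0 1 0 0 0 0.
Definition alpha : kQ k := KQ 0 0 0 1 0 0.
Definition beta : kQ k := KQ 0 0 'X 0 0 0.
Definition gamma : kQ k := KQ 0 0 0 0 1 0.
Definition polyb (p : {poly k}) : kQ k := KQ 0 0 p 0 0 0.

Definition is_derivation (D : kQ k -> kQ k) : Prop :=
  (forall x y, D (kQadd x y) = kQadd (D x) (D y)) /\
  (forall c x, D (kQscale c x) = kQscale c (D x)) /\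
  (forall x y, D (kQmul x y) = kQadd (kQmul (D x) y) (kQmul x (D y))).

Definition normalized (D : kQ k -> kQ k) : Prop :=
  D e1 = kQzero /\ D e2 = kQzero /\ D e3 = kQzero.

Definition kQsum (n : nat) (f : nat -> kQ k) : kQ k :=
  foldr (fun i acc => kQadd (f i) acc) kQzero (iota 0 n).

Definition in_gen_ideal (G : kQ k -> Prop) (z : kQ k) : Prop :=
  exists (N : nat) (u g w : nat -> kQ k),
    (forall i, (i < N)%N -> G (g i)) /\
    z = kQsum N (fun i => kQmul (kQmul (u i) (g i)) (w i)).

Definition I_gens (n n' n'' : nat) (V : {poly k} -> Prop) (g : kQ k) : Prop :=
  g = kQmul alpha (polyb ('X^n')) \/
  g = polyb ('X^n) \/
  g = kQmul (polyb ('X^n'')) gamma \/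
  exists v, V v /\ g = kQmul (kQmul alpha (polyb v)) gamma.

Definition in_I n n' n'' V := in_gen_ideal (I_gens n n' n'' V).

Definition preserves_I n n' n'' V (D : kQ k -> kQ k) : Prop :=
  forall x, in_I n n' n'' V x -> in_I n n' n'' V (D x).

Definition induced_inner n n' n'' V (D : kQ k -> kQ k) : Prop :=
  exists z : kQ k, forall x,
    in_I n n' n'' V (kQsub (D x) (kQsub (kQmul z x) (kQmul x z))).

Definition Theta (a b h : {poly k}) (v : {poly k}) : {poly k} :=
  (a + h) * v + b * v^`().

Definition is_subspace (V : {poly k} -> Prop) : Prop :=
  V 0 /\ (forall (c : k) u v, V u -> V v -> V (c *: u + v)).

End KQops.
Arguments kQzero {k}. Arguments e1 {k}. Arguments e2 {k}. Arguments e3 {k}.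
Arguments alpha {k}. Arguments beta {k}. Arguments gamma {k}.

(* Main.v *)
Require Import Defs.
From HB Require Import structures.
From mathcomp Require Import all_boot all_order all_algebra.
From mathcomp Require Import ring.
Import GRing.Theory.
Local Open Scope ring_scope.
Set Implicit Arguments. Unset Strict Implicit.

Lemma kQE (k : fieldType) (x y : kQ k) : c1 x = c1 y -> c3 x = c3 y ->
  p2 x = p2 y -> pa x = pa y -> pg x = pg y -> pag x = pag y -> x = y.
Proof. by case: x; case: y => /= ? ? ? ? ? ? ? ? ? ? ? ? -> -> -> -> -> ->. Qed.

Ltac kqs := apply: kQE => /=; rewrite -?mul_polyC; ring.

Lemma deq (k : fieldType) (d p q : {poly k}) : d %| p -> p = q -> d %| q.
Proof. by move=> h <-. Qed.

Lemma Xfactor (k : fieldType) (b : {poly k}) : exists r, b = r * 'X + (b.[0])%:P.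
Proof.
elim/poly_ind: b => [|p c _]; first by exists 0; rewrite horner0 mul0r add0r.
exists p; rewrite !hornerE; ring.
Qed.

Lemma Xdvd0 (k : fieldType) (m : nat) (p : {poly k}) : (0 < m)%N -> 'X^m %| p -> p.[0] = 0.
Proof.
move=> m0 /dvdpP [q ->]; case: m m0 => // m _.
by rewrite exprSr mulrA hornerMX mulr0.
Qed.

Lemma key1 (k : fieldType) (m : nat) (b : {poly k}) :
  (0 < m)%N -> 'X^m %| b * ('X^m)^`() -> m%:R * b.[0] = 0.
Proof.
case: m => // m _ /dvdpP [q Hq].
have := congr1 (fun p : {poly k} => p`_m) Hq.
rewrite coefMXn ltnSn derivXn /= mulrnAr -mulrnAl coefMXn ltnn subnn coefMn.
by rewrite horner_coef0 mulr_natl.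
Qed.

Lemma key2 (k : fieldType) (m : nat) (b q : {poly k}) :
  (0 < m)%N -> m%:R * b.[0] = 0 -> 'X^m %| b * (q * 'X^m)^`().
Proof.
case: m => // m _ hb; have [r Hr] := Xfactor b.
apply/dvdpP; exists ((r * q *+ m.+1) + b * q^`()).
rewrite derivM derivXn /=.
have -> : b * (q^`() * 'X^(m.+1) + q * ('X^m *+ m.+1)) =
   ((r * q *+ m.+1) + b * q^`()) * 'X^(m.+1) + ((m.+1)%:R * b.[0])%:P * q * 'X^m.
  by move: Hr; set c := b.[0] => Hr; rewrite Hr exprS; ring.
by rewrite hb mul0r mul0r addr0.
Qed.

Lemma gcd2 (k : fieldType) (b0 : k) (m l : nat) : (0 < m)%N ->
  ((gcdn m l)%:R * b0 = 0 <-> (m%:R * b0 = 0 /\ l%:R * b0 = 0)).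
Proof.
move=> m0; split.
  move=> h; split.
    by rewrite -(divnK (dvdn_gcdl m l)) natrM -mulrA h mulr0.
  by rewrite -(divnK (dvdn_gcdr m l)) natrM -mulrA h mulr0.
case=> hm hl; have [a _ /dvdnP [c hc]] := Bezoutl l m0.
have : (gcdn m l + a * l)%:R * b0 = (c * m)%:R * b0 by rewrite hc.
rewrite natrD !natrM mulrDl -!mulrA hl hm !mulr0 addr0 => ->. done.
Qed.

Lemma gcd3 (k : fieldType) (b0 : k) (n n' n'' : nat) : (0 < n)%N ->
  ((gcdn (gcdn n n') n'')%:R * b0 = 0 <->
   [/\ n%:R * b0 = 0, n'%:R * b0 = 0 & n''%:R * b0 = 0]).
Proof.
move=> n0; rewrite gcd2; last by rewrite gcdn_gt0 n0.
rewrite gcd2 //; split; [by case=> [[]] | by case=> ? ? ?].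
Qed.

Definition Pset (k : fieldType) (n n' n'' : nat) (V : {poly k} -> Prop) (x : kQ k) :=
  c1 x = 0 /\ c3 x = 0 /\ 'X^n %| p2 x /\ 'X^n' %| pa x /\ 'X^n'' %| pg x /\ V (pag x).

Lemma PsetI (k : fieldType) (n n' n'' : nat) (V : {poly k} -> Prop) (x : kQ k) :
  c1 x = 0 -> c3 x = 0 -> 'X^n %| p2 x -> 'X^n' %| pa x -> 'X^n'' %| pg x -> V (pag x) ->
  Pset n n' n'' V x.
Proof. by rewrite /Pset; do 5 (move=> ?; split => //). Qed.

Lemma Xle (k : fieldType) (i j : nat) (p : {poly k}) : (i <= j)%N -> 'X^j %| p -> 'X^i %| p.
Proof. by move=> h; apply: dvdp_trans; apply: dvdp_exp2l. Qed.

Lemma Vadd (k : fieldType) (V : {poly k} -> Prop) u v : is_subspace V -> V u -> V v -> V (u + v).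
Proof. by case=> _ h hu hv; move: (h 1 u v hu hv); rewrite scale1r. Qed.

Lemma Vscale (k : fieldType) (V : {poly k} -> Prop) c u : is_subspace V -> V u -> V (c *: u).
Proof. by case=> h0 h hu; move: (h c u 0 hu h0); rewrite addr0. Qed.

Lemma Vdiv (k : fieldType) (V : {poly k} -> Prop) m u :
  (forall p : {poly k}, V ('X^m * p)) -> 'X^m %| u -> V u.
Proof. by move=> hV /dvdpP [q ->]; rewrite mulrC. Qed.

Lemma Pset_add (k : fieldType) n n' n'' (V : {poly k} -> Prop) x y :
  is_subspace V -> Pset n n' n'' V x -> Pset n n' n'' V y -> Pset n n' n'' V (kQadd x y).
Proof.
move=> hs [x1 [x3 [? [? [? ?]]]]] [y1 [y3 [? [? [? ?]]]]]; apply: PsetI => /=.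
- by rewrite x1 y1 addr0.
- by rewrite x3 y3 addr0.
all: try by apply: dvdp_add.
exact: Vadd.
Qed.

Lemma Pset_mull (k : fieldType) n n' n'' (V : {poly k} -> Prop) x y :
  (n' <= n)%N -> (n'' <= n)%N -> is_subspace V ->
  (forall p : {poly k}, V ('X^(minn n' n'') * p)) ->
  Pset n n' n'' V x -> Pset n n' n'' V (kQmul y x).
Proof.
move=> h1 h2 hs hV [e1 [e3 [d2 [da [dg vg]]]]]; apply: PsetI => /=.
- by rewrite e1 mulr0.
- by rewrite e3 mulr0.
- exact: dvdp_mull.
- by apply: dvdp_add; [rewrite -mul_polyC; apply: dvdp_mull | apply: dvdp_mull; apply: Xle d2].
- by rewrite e3 scale0r addr0; apply: dvdp_mull.
- rewrite e3 scale0r addr0; apply: Vadd => //; first exact: Vscale.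
  apply: (Vdiv hV); apply: dvdp_mull; apply: Xle dg; exact: geq_minr.
Qed.

Lemma Pset_mulr (k : fieldType) n n' n'' (V : {poly k} -> Prop) x y :
  (n' <= n)%N -> (n'' <= n)%N -> is_subspace V ->
  (forall p : {poly k}, V ('X^(minn n' n'') * p)) ->
  Pset n n' n'' V x -> Pset n n' n'' V (kQmul x y).
Proof.
move=> h1 h2 hs hV [e1 [e3 [d2 [da [dg vg]]]]]; apply: PsetI => /=.
- by rewrite e1 mul0r.
- by rewrite e3 mul0r.
- exact: dvdp_mulr.
- by rewrite e1 scale0r add0r; apply: dvdp_mulr.
- by apply: dvdp_add; [apply: dvdp_mulr; apply: Xle d2 | rewrite -mul_polyC; apply: dvdp_mull].
- rewrite e1 scale0r add0r; apply: Vadd => //; last exact: Vscale.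
  apply: (Vdiv hV); apply: dvdp_mulr; apply: Xle da; exact: geq_minl.
Qed.

Lemma Pset0 (k : fieldType) n n' n'' (V : {poly k} -> Prop) :
  is_subspace V -> Pset n n' n'' V kQzero.
Proof. by case=> h0 _; apply: PsetI => //=; apply: dvdp0. Qed.

Lemma in_I_iff (k : fieldType) n n' n'' (V : {poly k} -> Prop) x :
  (n' <= n)%N -> (n'' <= n)%N -> is_subspace V ->
  (forall p : {poly k}, V ('X^(minn n' n'') * p)) ->
  (in_I n n' n'' V x <-> Pset n n' n'' V x).
Proof.
move=> h1 h2 hs hV; split.
  case=> N [u [g [w [hg ->]]]].
  rewrite /kQsum; have : forall i, i \in iota 0 N -> I_gens n n' n'' V (g i).
    by move=> i; rewrite mem_iota add0n; apply: hg.
  elim: (iota 0 N) => [_ | i s IH hi] /=; first exact: Pset0.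
  apply: Pset_add => //; last by apply: IH => j hj; apply: hi; rewrite inE hj orbT.
  apply: Pset_mulr => //; apply: Pset_mull => //.
  have : I_gens n n' n'' V (g i) by apply: hi; rewrite inE eqxx.
  case=> [->|[->|[->|[v [hv ->]]]]]; (apply: PsetI => /=; rewrite ?(scale0r, scale1r, mul0r, mulr0, mul1r, mulr1, add0r, addr0) //; try apply: dvdp0; try apply: dvdpp; try (by case: hs)).
case=> he1 [he3 [/dvdpP [q2 d2] [/dvdpP [qa da] [/dvdpP [qg dg] vg]]]].
exists 4%N, (fun i => match i with 0 => e2 | 1 => e1 | 2 => polyb qg | _ => e1 end),
  (fun i => match i with 0 => polyb ('X^n) | 1 => kQmul alpha (polyb ('X^n'))
         | 2 => kQmul (polyb ('X^n'')) gamma | _ => kQmul (kQmul alpha (polyb (pag x))) gamma end),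
  (fun i => match i with 0 => polyb q2 | 1 => polyb qa | 2 => e3 | _ => e3 end).
split.
  case=> [|[|[|[|i]]]] // _; rewrite /I_gens; [right; left | left | right; right; left | right; right; right; by exists (pag x)]; done.
move: he1 he3 d2 da dg; case: x vg => x1 x3 xp xa xg xag /= _ -> -> -> -> ->.
rewrite /kQsum /=; kqs.
Qed.

Definition Dform (k : fieldType) (a b h : {poly k}) (x : kQ k) : kQ k :=
  KQ 0 0 (b * (p2 x)^`()) (a * pa x + b * (pa x)^`())
     (b * (pg x)^`() + h * pg x) ((a + h) * pag x + b * (pag x)^`()).

Lemma kQadd0l (k : fieldType) (x : kQ k) : kQadd kQzero x = x.
Proof. kqs. Qed.
Lemma kQmul0l (k : fieldType) (x : kQ k) : kQmul kQzero x = kQzero.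
Proof. kqs. Qed.
Lemma kQmul0r (k : fieldType) (x : kQ k) : kQmul x kQzero = kQzero.
Proof. kqs. Qed.

Lemma Dzero (k : fieldType) (D : kQ k -> kQ k) : is_derivation D -> D kQzero = kQzero.
Proof.
case=> _ [hs _]; have -> : kQzero = kQscale 0 (kQzero : kQ k) by kqs.
by rewrite hs; kqs.
Qed.

Lemma Dsand (k : fieldType) (D : kQ k -> kQ k) u y w : is_derivation D ->
  D u = kQzero -> D w = kQzero -> D (kQmul (kQmul u y) w) = kQmul (kQmul u (D y)) w.
Proof.
move=> hD; have [_ [_ hm]] := hD; move=> hu hw.
by rewrite !hm hu hw kQmul0l kQmul0r kQadd0l; kqs.
Qed.

Lemma Dpolyb (k : fieldType) (D : kQ k -> kQ k) (b : {poly k}) p :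
  is_derivation D -> normalized D -> D beta = polyb b -> D (polyb p) = polyb (b * p^`()).
Proof.
move=> hD [_ [h2 _]] hb; have [ha [hs hm]] := hD.
elim/poly_ind: p => [|p c IH].
  have -> : polyb (0 : {poly k}) = kQzero by kqs.
  by rewrite Dzero //; kqs.
have -> : polyb (p * 'X + c%:P) = kQadd (kQmul (polyb p) beta) (kQscale c e2) by kqs.
rewrite ha hm hs IH hb h2 derivD derivM derivX derivC; kqs.
Qed.

Lemma D_eq (k : fieldType) (D : kQ k -> kQ k) (a b h : {poly k}) :
  is_derivation D -> normalized D ->
  D alpha = kQmul alpha (polyb a) -> D beta = polyb b ->
  D gamma = kQmul (polyb h) gamma -> forall x, D x = Dform a b h x.
Proof.
move=> hD hN hA hB hG x; have [ha [hs hm]] := hD; have [h1 [h2 h3]] := hN.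
have E : x = kQadd (kQscale (c1 x) e1) (kQadd (kQscale (c3 x) e3) (kQadd (polyb (p2 x))
   (kQadd (kQmul alpha (polyb (pa x))) (kQadd (kQmul (polyb (pg x)) gamma)
      (kQmul (kQmul alpha (polyb (pag x))) gamma))))).
  by case: x => ? ? ? ? ? ?; kqs.
rewrite {1}E !ha !hs !hm h1 h3 hA hG !(Dpolyb _ hD hN hB).
rewrite /Dform /=; kqs.
Qed.

Lemma d1 (k : fieldType) : (1 : {poly k})^`() = 0.
Proof. by rewrite -polyC1 derivC. Qed.

Lemma Veq (k : fieldType) (V : {poly k} -> Prop) p q : V p -> p = q -> V q.
Proof. by move=> h <-. Qed.

Lemma part1a (k : fieldType) (D : kQ k -> kQ k) : is_derivation D -> normalized D ->
  exists a b h : {poly k},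
    D alpha = kQmul alpha (polyb a) /\ D beta = polyb b /\
    D gamma = kQmul (polyb h) gamma.
Proof.
move=> hD [h1 [h2 h3]].
exists (pa (D alpha)), (p2 (D beta)), (pg (D gamma)); split; [|split].
- have E : D alpha = kQmul (kQmul e1 (D alpha)) e2.
    by rewrite -(Dsand alpha hD h1 h2); congr (D _); kqs.
  by rewrite {1}E; kqs.
- have E : D beta = kQmul (kQmul e2 (D beta)) e2.
    by rewrite -(Dsand beta hD h2 h2); congr (D _); kqs.
  by rewrite {1}E; kqs.
- have E : D gamma = kQmul (kQmul e2 (D gamma)) e3.
    by rewrite -(Dsand gamma hD h2 h3); congr (D _); kqs.
  by rewrite {1}E; kqs.
Qed.

Lemma part1b (k : fieldType) (a b h : {poly k}) : exists D : kQ k -> kQ k,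
       is_derivation D /\ normalized D /\
       D alpha = kQmul alpha (polyb a) /\ D beta = polyb b /\
       D gamma = kQmul (polyb h) gamma.
Proof.
exists (Dform a b h); split; [|split; [|split; [|split]]].
- split; [|split] => *; rewrite /Dform /= ?derivD ?derivZ ?derivM; kqs.
- by split; [|split]; rewrite /Dform /= ?d1 ?deriv0; kqs.
- by rewrite /Dform /= ?d1 ?deriv0; kqs.
- by rewrite /Dform /= ?d1 ?deriv0 ?derivX; kqs.
- by rewrite /Dform /= ?d1 ?deriv0; kqs.
Qed.

Lemma part2 (k : fieldType) (n n' n'' : nat) (V : {poly k} -> Prop)
          (D : kQ k -> kQ k) (a b h : {poly k}) :
     (2 <= n)%N -> (1 <= n' <= n)%N -> (1 <= n'' <= n)%N ->
     is_subspace V -> (forall p : {poly k}, V ('X^(minn n' n'') * p)) ->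
     is_derivation D -> normalized D ->
     D alpha = kQmul alpha (polyb a) -> D beta = polyb b ->
     D gamma = kQmul (polyb h) gamma ->
     (preserves_I n n' n'' V D <->
        ((gcdn (gcdn n n') n'')%:R * b.[0] = 0 /\
         (forall v, V v -> V (Theta a b h v)))).
Proof.
move=> hn /andP [hn'0 hn'] /andP [hn''0 hn''] hs hV hD hN hA hB hG.
have n0 : (0 < n)%N by apply: leq_trans hn.
have hI x := in_I_iff x hn' hn'' hs hV.
have hDx := D_eq hD hN hA hB hG.
have V0 : V 0 by case: hs.
rewrite /preserves_I gcd3 //; split.
  move=> P.
  have T : forall x, Pset n n' n'' V x -> Pset n n' n'' V (Dform a b h x).
    by move=> x px; rewrite -hDx; apply/hI; apply: P; apply/hI.
  have [_ [_ [t1 _]]] : Pset n n' n'' V (Dform a b h (KQ 0 0 'X^n 0 0 0)) by apply: T; apply: PsetI => //=; try apply: dvdp0; try apply: dvdpp.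
  have [_ [_ [_ [t2 _]]]] : Pset n n' n'' V (Dform a b h (KQ 0 0 0 'X^n' 0 0)) by apply: T; apply: PsetI => //=; try apply: dvdp0; try apply: dvdpp.
  have [_ [_ [_ [_ [t3 _]]]]] : Pset n n' n'' V (Dform a b h (KQ 0 0 0 0 'X^n'' 0)) by apply: T; apply: PsetI => //=; try apply: dvdp0; try apply: dvdpp.
  move: t2 t3 => /=; rewrite dvdp_addr; last exact: dvdp_mull.
  rewrite dvdp_addl; last exact: dvdp_mull.
  move=> t2 t3; split; first split.
  - exact: key1 t1.
  - exact: key1 t2.
  - exact: key1 t3.
  move=> v hv.
  have [_ [_ [_ [_ [_ t4]]]]] : Pset n n' n'' V (Dform a b h (KQ 0 0 0 0 0 v)) by apply: T; apply: PsetI => //=; try apply: dvdp0; try apply: dvdpp.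
  exact: t4.
case=> [[g1 g2 g3] hT] x /hI [x1 [x3 [/dvdpP [q2 d2] [/dvdpP [qa da] [/dvdpP [qg dg] vg]]]]].
apply/hI; rewrite hDx; apply: PsetI => //=.
- by rewrite d2; apply: key2.
- by rewrite da; apply: dvdp_add; [apply: dvdp_mull; apply: dvdp_mull | apply: key2].
- by rewrite dg; apply: dvdp_add; [apply: key2 | apply: dvdp_mull; apply: dvdp_mull].
- exact: hT.
Qed.

Lemma compE (k : fieldType) (a b h : {poly k}) (z x : kQ k) :
  kQsub (Dform a b h x) (kQsub (kQmul z x) (kQmul x z)) =
  KQ 0 0 (b * (p2 x)^`())
   ((a - (c1 z)%:P + p2 z) * pa x + b * (pa x)^`() - pa z * p2 x + c1 x *: pa z)
   ((h - p2 z + (c3 z)%:P) * pg x + b * (pg x)^`() - c3 x *: pg z + p2 x * pg z)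
   ((a + h - (c1 z - c3 z)%:P) * pag x + b * (pag x)^`() - pa z * pg x + pa x * pg z
      - c3 x *: pag z + c1 x *: pag z).
Proof. rewrite /kQsub /kQopp /Dform; kqs. Qed.

Lemma part3 (k : fieldType) (n n' n'' : nat) (V : {poly k} -> Prop)
          (D : kQ k -> kQ k) (a b h : {poly k}) :
     (2 <= n)%N -> (1 <= n' <= n)%N -> (1 <= n'' <= n)%N ->
     is_subspace V -> (forall p : {poly k}, V ('X^(minn n' n'') * p)) ->
     is_derivation D -> normalized D ->
     D alpha = kQmul alpha (polyb a) -> D beta = polyb b ->
     D gamma = kQmul (polyb h) gamma ->
        (induced_inner n n' n'' V D <->
           ('X^(minn n' n'') %| (a + h - (a.[0] + h.[0])%:P) /\
            'X^n %| b)).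
Proof.
move=> hn /andP [hn'0 hn'] /andP [hn''0 hn''] hs hV hD hN hA hB hG.
have hI x := in_I_iff x hn' hn'' hs hV.
have hDx := D_eq hD hN hA hB hG.
have m0 : (0 < minn n' n'')%N by rewrite leq_min hn'0 hn''0.
rewrite /induced_inner; split.
  case=> z hz.
  have P x : Pset n n' n'' V (kQsub (Dform a b h x) (kQsub (kQmul z x) (kQmul x z))).
    by rewrite -hDx; apply/hI.
  have [_ [_ [t1 _]]] := P (KQ 0 0 'X 0 0 0).
  have [_ [_ [_ [t2 _]]]] := P (KQ 0 0 0 1 0 0).
  have [_ [_ [_ [_ [t3 _]]]]] := P (KQ 0 0 0 0 1 0).
  move: t1 t2 t3; rewrite !compE /= derivX d1 ?deriv0 -!mul_polyC => t1 t2 t3.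
  have Hb : 'X^n %| b by apply: (deq t1); ring.
  have Hm : 'X^(minn n' n'') %| a + h - (c1 z - c3 z)%:P.
    apply: (deq (dvdp_add (Xle (geq_minl n' n'') t2) (Xle (geq_minr n' n'') t3))); ring.
  have E : c1 z - c3 z = a.[0] + h.[0].
    have := Xdvd0 m0 Hm; rewrite !hornerE => /eqP; rewrite subr_eq0 => /eqP ->. done.
  by rewrite -E.
case=> Hah Hb.
have HbX j : (j <= n)%N -> 'X^j %| b by move=> hj; apply: Xle Hb.
have Hm : (minn n' n'' <= n)%N by apply: leq_trans (geq_minl _ _) hn'.
have hpag x : V ((a + h - (a.[0] + h.[0])%:P) * pag x + b * (pag x)^`()).
  apply: Vadd => //; apply: (Vdiv hV); [apply: dvdp_mulr Hah | apply: dvdp_mulr; exact: HbX].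
case: (leqP n'' n') => hle.
  have Hm' : minn n' n'' = n'' by apply/minn_idPr.
  rewrite Hm' in Hah.
  exists (KQ (a.[0] + h.[0]) 0 ((a.[0] + h.[0])%:P - a) 0 0 0) => x; apply/hI; rewrite hDx compE; apply: PsetI => //=.
  - by apply: dvdp_mulr.
  - by apply: (deq (dvdp_mulr ((pa x)^`()) (HbX _ hn'))); rewrite -!mul_polyC; ring.
  - apply: (deq (dvdp_add (dvdp_mulr (pg x) Hah) (dvdp_mulr ((pg x)^`()) (HbX _ hn'')))).
    by rewrite -!mul_polyC; ring.
  - by apply: (Veq (hpag x)); rewrite -!mul_polyC; ring.
have Hm' : minn n' n'' = n' by apply/minn_idPl; apply: ltnW.
rewrite Hm' in Hah.
exists (KQ (a.[0] + h.[0]) 0 h 0 0 0) => x; apply/hI; rewrite hDx compE; apply: PsetI => //=.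
- by apply: dvdp_mulr.
- apply: (deq (dvdp_add (dvdp_mulr (pa x) Hah) (dvdp_mulr ((pa x)^`()) (HbX _ hn')))).
  by rewrite -!mul_polyC; ring.
- by apply: (deq (dvdp_mulr ((pg x)^`()) (HbX _ hn''))); rewrite -!mul_polyC; ring.
- by apply: (Veq (hpag x)); rewrite -!mul_polyC; ring.
Qed.

Theorem mainTheorem5 (k : fieldType) :
  ( (* (1) normalized derivations of kQ *)
    (forall D : kQ k -> kQ k, is_derivation D -> normalized D ->
       exists a b h : {poly k},
         D alpha = kQmul alpha (polyb a) /\ D beta = polyb b /\
         D gamma = kQmul (polyb h) gamma) /\
    (forall a b h : {poly k}, exists D : kQ k -> kQ k,
       is_derivation D /\ normalized D /\
       D alpha = kQmul alpha (polyb a) /\ D beta = polyb b /\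
       D gamma = kQmul (polyb h) gamma) ) /\
  (forall (n n' n'' : nat) (V : {poly k} -> Prop)
          (D : kQ k -> kQ k) (a b h : {poly k}),
     (2 <= n)%N -> (1 <= n' <= n)%N -> (1 <= n'' <= n)%N ->
     is_subspace V -> (forall p : {poly k}, V ('X^(minn n' n'') * p)) ->
     is_derivation D -> normalized D ->
     D alpha = kQmul alpha (polyb a) -> D beta = polyb b ->
     D gamma = kQmul (polyb h) gamma ->
     (* (2) *)
     (preserves_I n n' n'' V D <->
        ((gcdn (gcdn n n') n'')%:R * b.[0] = 0 /\
         (forall v, V v -> V (Theta a b h v)))) /\
     (* (3) *)
     (preserves_I n n' n'' V D ->
        (induced_inner n n' n'' V D <->
           ('X^(minn n' n'') %| (a + h - (a.[0] + h.[0])%:P) /\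
            'X^n %| b)))).
Proof.
split; first by split; [exact: part1a | exact: part1b].
move=> n n' n'' V D a b h h1 h2 h3 h4 h5 h6 h7 h8 h9 h10; split.
  exact: part2.
by move=> _; apply: part3.
Qed.
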